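(* Let $n\ge 3$ and let $BP_n$ be the $n$-gonal bipyramid. If $n$ is odd, $BP_n$ is $z$-knotted. If $n=2k$ with $k$ odd, $BP_n$ has exactly two zigzags up to reversal. If $n=2k$ with $k$ even, $BP_n$ has exactly four zigzags up to reversal.
   Context: The $n$-gonal bipyramid $BP_n$ ($n\ge3$) is the triangulation of the sphere with vertices $1,\dots,n,a,b$, edges $i(i+1)$ (indices mod $n$, the base), $ai$ and $bi$ for all $i$, and faces $\{a,i,i+1\}$, $\{b,i,i+1\}$. A zigzag in a triangulation is a sequence of edges $(e_i)$ such that $e_i,e_{i+1}$ are distinct edges of a common face, the face containing $e_i,e_{i+1}$ differs from the face containing $e_{i+1},e_{i+2}$, and $e_i,e_{i+2}$ have no common vertex; it is regarded as a cyclic sequence, and its reversal $Z^{-1}$ is also a zigzag with $Z\ne Z^{-1}$. A triangulation is $z$-knotted if it has exactly two zigzags $Z$ and $Z^{-1}$. *)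

(* Defs.v *)
From HB Require Import structures.
From mathcomp Require Import all_boot all_order all_algebra.
Set Implicit Arguments. Unset Strict Implicit. Unset Printing Implicit Defensive.
Import GRing.Theory Num.Theory.

(* A triangulation is given by its set of faces (triangles = 3-element vertex sets).
   Edges are 2-element vertex sets contained in some face. *)
Section Zigzags.
Variable V : finType.
Variable faces : {set {set V}}.

Definition is_edge (e : {set V}) : Prop :=
  #|e| = 2 /\ exists2 F, F \in faces & e \subset F.

(* A zigzag: a bi-infinite sequence of edges (indexed by int); cyclic sequences
   are the periodic ones, and (by finiteness and determinism) every such sequence
   is periodic. Zigzags are identified up to shift of the index. *)
Definition is_zigzag (Z : int -> {set V}) : Prop :=
  forall i : int,
    [/\ is_edge (Z i),
        Z i <> Z (i + 1)%R /\
          (exists2 F, F \in faces & (Z i \subset F) && (Z (i + 1)%R \subset F)),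
        (forall F F', F \in faces -> F' \in faces ->
            Z i \subset F -> Z (i + 1)%R \subset F ->
            Z (i + 1)%R \subset F' -> Z (i + 2)%R \subset F' -> F <> F')
      & [disjoint Z i & Z (i + 2)%R]].

Definition zrev (Z : int -> {set V}) : int -> {set V} := fun i => Z (- i)%R.

Definition zeq (Z1 Z2 : int -> {set V}) : Prop :=
  exists s : int, forall i : int, Z1 i = Z2 (i + s)%R.

Definition z_knotted : Prop :=
  exists Z, [/\ is_zigzag Z, ~ zeq Z (zrev Z) &
     forall Z', is_zigzag Z' -> zeq Z' Z \/ zeq Z' (zrev Z)].

Definition num_zigzags_up_to_rev (m : nat) : Prop :=
  exists Zs : 'I_m -> (int -> {set V}),
    [/\ forall j, is_zigzag (Zs j),
        forall j1 j2, j1 <> j2 -> ~ zeq (Zs j1) (Zs j2) /\ ~ zeq (Zs j1) (zrev (Zs j2))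
      & forall Z, is_zigzag Z -> exists j, zeq Z (Zs j) \/ zeq Z (zrev (Zs j))].

End Zigzags.

(* The n-gonal bipyramid: vertices inl i (i : 'I_n, base) and inr b (b : bool; the
   two apexes a = inr true, b = inr false). Faces {apex, i, i+1 mod n}. *)
Definition BP_vertex (n : nat) : finType := ('I_n + bool)%type.

Definition BP_faces (n : nat) : {set {set BP_vertex n}} :=
  [set [set (inr x : BP_vertex n); inl i; inl (ordS i)] | x : bool, i : 'I_n].

(* Main.v *)
Require Import Defs.
From mathcomp Require Import all_boot all_order all_algebra.
From mathcomp Require Import zify ring.
Set Implicit Arguments. Unset Strict Implicit. Unset Printing Implicit Defensive.
Import GRing.Theory Num.Theory.

Section Gen.
Local Open Scope ring_scope.
Variable V : finType.
Variable faces : {set {set V}}.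
Hypothesis face3 : forall F, F \in faces -> (#|F| <= 3)%N.

Lemma zz_local (Z : int -> {set V}) :
  (forall i, [/\ #|Z i| = 2%N, Z i <> Z (i+1),
     exists2 F, F \in faces & (Z i \subset F) && (Z (i+1) \subset F)
     & [disjoint Z i & Z (i+2)]]) -> is_zigzag faces Z.
Proof.
move=> H i; have [c2 ne fc dj] := H i.
split => //.
- split=> //; case: fc => F FF /andP[s _]; by exists F.
- move=> F F' FF FF' s0 s1 s1' s2 eFF; subst F'.
  have: (#|Z i :|: Z (i+2)%R| <= #|F|)%N.
    by apply subset_leq_card; rewrite subUset s0 s2.
  rewrite cardsU (disjoint_setI0 dj) cards0 c2.
  have [c2' _ _ _] := H (i+2). rewrite c2'.
  by move: (face3 FF); case: #|F| => [|[|[|[|]]]].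
Qed.

Lemma zz_shift Z s : is_zigzag faces Z -> is_zigzag faces (fun t => Z (t + s)).
Proof.
move=> H i.
have E1 : i + 1 + s = i + s + 1 by ring.
have E2 : i + 2 + s = i + s + 2 by ring.
by rewrite E1 E2; apply H.
Qed.

Lemma zz_rev Z : is_zigzag faces Z -> is_zigzag faces (zrev Z).
Proof.
move=> H; apply: zz_local => i; rewrite /zrev.
have [[c2 _] _ _ _] := H (- i).
have [_ [ne fc] _ _] := H (- (i+1)).
have [_ _ _ dj] := H (- (i+2)).
have E1 : - (i + 1) + 1 = - i by ring.
have E2 : - (i + 2) + 2 = - i by ring.
rewrite E1 in ne fc; rewrite E2 in dj.
split => //.
- by move=> e; apply: ne.
- by case: fc => F FF /andP[a b]; exists F => //; rewrite a b.
- by rewrite disjoint_sym.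
Qed.

Lemma zeq_refl (Z : int -> {set V}) : zeq Z Z.
Proof. by exists 0 => i; rewrite addr0. Qed.

Lemma zeq_sym (Z1 Z2 : int -> {set V}) : zeq Z1 Z2 -> zeq Z2 Z1.
Proof. move=> [s H]; exists (- s) => i; rewrite H; congr Z2; ring. Qed.

Lemma zeq_trans (Z1 Z2 Z3 : int -> {set V}) : zeq Z1 Z2 -> zeq Z2 Z3 -> zeq Z1 Z3.
Proof. move=> [s H] [t K]; exists (s + t) => i; rewrite H K; congr Z3; ring. Qed.

Lemma zeq_rev (Z1 Z2 : int -> {set V}) : zeq Z1 Z2 -> zeq (zrev Z1) (zrev Z2).
Proof. move=> [s H]; exists (- s) => i; rewrite /zrev H; congr Z2; ring. Qed.

Hypothesis two_faces : forall (e F G G' : {set V}), #|e| = 2%N ->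
  F \in faces -> G \in faces -> G' \in faces ->
  e \subset F -> e \subset G -> e \subset G' -> F <> G -> F <> G' -> G = G'.

Lemma next_uniq (e0 e1 e2 e2' F G G' : {set V}) :
  #|e0| = 2%N -> #|e1| = 2%N -> #|e2| = 2%N -> #|e2'| = 2%N ->
  F \in faces -> G \in faces -> G' \in faces ->
  e0 \subset F -> e1 \subset F -> e1 \subset G -> e2 \subset G ->
  e1 \subset G' -> e2' \subset G' -> F <> G -> F <> G' ->
  [disjoint e0 & e2] -> [disjoint e0 & e2'] -> e2 = e2'.
Proof.
move=> c0 c1 c2 c2' FF GF G'F s0F s1F s1G s2G s1G' s2G' nFG nFG' d2 d2'.
have eG := two_faces c1 FF GF G'F s1F s1G s1G' nFG nFG'; subst G'.
have : (#|e0 :|: e1| <= #|F|)%N by apply subset_leq_card; rewrite subUset s0F s1F.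
rewrite cardsU c0 c1 => hc.
have : (0 < #|e0 :&: e1|)%N.
  move: hc (face3 FF) => hc h3; lia.
case/card_gt0P => u; rewrite inE => /andP[u0 u1].
have sub2 (e : {set V}) : e \subset G -> [disjoint e0 & e] -> e \subset G :\ u.
  move=> sG dj; apply/subsetP => y ye; rewrite !inE (subsetP sG) // andbT.
  apply/eqP => yu; subst y.
  by rewrite (disjointFr dj u0) in ye.
have cG : (#|G :\ u| <= 2)%N.
  have := face3 GF; rewrite (cardsD1 u G) (subsetP s1G) //.
have h1 := sub2 _ s2G d2; have h2 := sub2 _ s2G' d2'.
have e1' : e2 = G :\ u.
  by apply/eqP; rewrite eqEcard h1 c2 cG.
have e2'' : e2' = G :\ u.
  by apply/eqP; rewrite eqEcard h2 c2' cG.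
by rewrite e1' e2''.
Qed.

Lemma zz_det Z W : is_zigzag faces Z -> is_zigzag faces W ->
  Z 0 = W 0 -> Z 1 = W 1 -> forall i, Z i = W i.
Proof.
move=> HZ HW h0 h1.
have fwd i : Z i = W i -> Z (i+1) = W (i+1) -> Z (i+2) = W (i+2).
  move=> e0 e1.
  have [[c0 _] [_ [F FF /andP[a b]]] nf _] := HZ i.
  have [[c1 _] [_ [G GF /andP[c d]]] _ _] := HZ (i+1).
  have [_ _ _ dj] := HZ i.
  have [_ [_ [G' G'F /andP[c' d']]] _ _] := HW (i+1).
  have [[c2 _] _ _ _] := HZ (i+2).
  have [[c2' _] _ _ _] := HW (i+2).
  have [_ _ nf' dj'] := HW i.
  have E : i + 1 + 1 = i + 2 by ring.
  rewrite E in d d'.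
  rewrite -e1 in c'; rewrite -e0 -e1 in nf' dj'.
  apply: (next_uniq c0 c1 c2 c2' FF GF G'F a b c d) => //.
  + exact: (nf F G FF GF a b c d).
  + exact: (nf' F G' FF G'F a b c' d').
have bwd i : Z (i+1) = W (i+1) -> Z (i+2) = W (i+2) -> Z i = W i.
  move=> e1 e2.
  have [[c0 _] [_ [G GF /andP[a b]]] nf dj] := HZ i.
  have [[c1 _] [_ [F FF /andP[c d]]] _ _] := HZ (i+1).
  have [[c0' _] [_ [G' G'F /andP[a' b']]] nf' dj'] := HW i.
  have [[c2 _] _ _ _] := HZ (i+2).
  have E : i + 1 + 1 = i + 2 by ring.
  rewrite E in d.
  apply: (next_uniq c2 c1 c0 c0' FF GF G'F d c b a) => //.
  + by rewrite e1.
  + move=> eq; subst G; exact: (nf F F GF FF a b c d).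
  + move=> eq; subst G'; rewrite -e1 in nf' b'; rewrite -e2 in nf'.
    exact: (nf' F F G'F FF a' b' c d).
  + by rewrite disjoint_sym.
  + by rewrite disjoint_sym e2.
have pos (k : nat) : Z k%:Z = W k /\ Z (k%:Z + 1) = W (k%:Z + 1).
  elim: k => [|k [IH1 IH2]]; first by rewrite add0r.
  have -> : (k.+1)%:Z = k%:Z + 1 by rewrite -addn1 PoszD.
  split=> //; have -> : k%:Z + 1 + 1 = k%:Z + 2 by ring.
  exact: fwd.
have neg (k : nat) : Z (- k%:Z) = W (- k%:Z) /\ Z (- k%:Z + 1) = W (- k%:Z + 1).
  elim: k => [|k [IH1 IH2]]; first by rewrite oppr0 add0r.
  have E1 : - (k.+1)%:Z + 1 = - k%:Z by rewrite -addn1 PoszD; ring.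
  have E2 : - (k.+1)%:Z + 2 = - k%:Z + 1 by rewrite -addn1 PoszD; ring.
  rewrite E1; split=> //; apply: bwd; by rewrite ?E1 ?E2.
case=> k; first by case: (pos k).
by have [] := neg k.+1; rewrite NegzE.
Qed.

End Gen.

Section BP.
Local Open Scope ring_scope.
Variable n : nat.
Hypothesis hn : (3 <= n)%N.

Lemma idx_subproof (z : int) : (`|(z %% n%:Z)%Z|%N < n)%N.
Proof.
have h1 : 0 <= (z %% n%:Z)%Z by apply: modz_ge0; apply/eqP; lia.
have h2 : (z %% n%:Z)%Z < n%:Z by apply: ltz_pmod; lia.
lia.
Qed.

Definition idx (z : int) : 'I_n := Ordinal (idx_subproof z).

Lemma idx_val (z : int) : (idx z)%:Z = (z %% n%:Z)%Z.
Proof.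
rewrite /= abszE ger0_norm //; apply: modz_ge0; apply/eqP; lia.
Qed.

Lemma idx_eqP a b : idx a = idx b <-> (n%:Z %| a - b)%Z.
Proof.
rewrite -eqz_mod_dvd; split.
- by move=> e; apply/eqP; rewrite -!idx_val e.
- move/eqP => e; apply: val_inj; apply/eqP; rewrite -eqz_nat.
  have h1 := idx_val a; have h2 := idx_val b; rewrite e -h2 in h1. by rewrite /= h1.
Qed.

Lemma idx_congr a b : (n%:Z %| a - b)%Z -> idx a = idx b.
Proof. by move/idx_eqP. Qed.

Lemma idx_ne a b : (a - b = 1 \/ a - b = 2 \/ b - a = 1 \/ b - a = 2) -> idx a <> idx b.
Proof.
move=> H /idx_eqP /dvdzP [q e].
have [hq|[hq|hq]] : q = 0 \/ 1 <= q \/ q <= -1 by lia.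
- subst q; lia.
- have : n%:Z <= q * n%:Z by rewrite -[X in X <= _]mul1r; apply: ler_wpM2r; lia.
  lia.
- have : q * n%:Z <= - n%:Z.
    rewrite -mulN1r; apply: ler_wpM2r; lia.
  lia.
Qed.

Lemma idx_ord (i : 'I_n) : idx (i%:Z) = i.
Proof.
apply: val_inj; apply/eqP; rewrite -eqz_nat idx_val modz_small //.
by have := ltn_ord i; lia.
Qed.

Lemma ordS_idx z : ordS (idx z) = idx (z + 1).
Proof.
apply: val_inj; apply/eqP; rewrite -eqz_nat.
change ((((idx z).+1 %% n)%N)%:Z == (idx (z+1))%:Z).
rewrite idx_val -modz_nat -addn1 PoszD idx_val.
by rewrite modzDml.
Qed.


Definition VT := BP_vertex n.
Definition ae (x : bool) (z : int) : {set VT} := [set inr x; inl (idx z)].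
Definition be (z : int) : {set VT} := [set inl (idx z); inl (idx (z + 1))].
Definition Fc (x : bool) (z : int) : {set VT} := [set inr x; inl (idx z); inl (idx (z + 1))].

Lemma idx_z1 z : idx z <> idx (z + 1).
Proof. apply: idx_ne; right; right; left; ring. Qed.

Lemma eq_inl (a b : 'I_n) : (inl a == inl b :> VT) = (a == b).
Proof. by apply/eqP/eqP => [[]|->]. Qed.
Lemma eq_inr (a b : bool) : (inr a == inr b :> VT) = (a == b).
Proof. by apply/eqP/eqP => [[]|->]. Qed.
Lemma eq_inlr (a : 'I_n) b : (inl a == inr b :> VT) = false.
Proof. by apply/eqP. Qed.
Lemma eq_inrl (a : 'I_n) b : (inr b == inl a :> VT) = false.
Proof. by apply/eqP. Qed.
Definition eqsE := (eq_inl, eq_inr, eq_inlr, eq_inrl).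

Lemma in_Fc_l y x z : (inl y \in Fc x z) = (y == idx z) || (y == idx (z + 1)).
Proof. by rewrite !inE !eqsE. Qed.
Lemma in_Fc_r y x z : (inr y \in Fc x z) = (y == x).
Proof. by rewrite !inE !eqsE !orbF. Qed.

Lemma faces_char F : F \in BP_faces n <-> exists x z, F = Fc x z.
Proof.
split.
- case/imset2P => x i _ _ ->; exists x, i%:Z.
  by rewrite /Fc idx_ord -ordS_idx idx_ord.
- case=> x [z ->]; apply/imset2P; exists x (idx z) => //.
  by rewrite /Fc ordS_idx.
Qed.

Lemma card2 (T : finType) (p q : T) : p <> q -> #|[set p; q]| = 2%N.
Proof. by move=> h; rewrite cards2; case: eqP. Qed.

Lemma card3 (T : finType) (a b c : T) : (#|[set a; b; c]| <= 3)%N.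
Proof.
apply: leq_trans (leq_card_setU _ _) _; rewrite cards1 cards2.
by case: (a != b).
Qed.

Lemma card_Fc x z : (#|Fc x z| <= 3)%N.
Proof. exact: card3. Qed.

Lemma face3 F : F \in BP_faces n -> (#|F| <= 3)%N.
Proof. by case/faces_char => x [z ->]; apply: card_Fc. Qed.


Lemma sub_eq (T : finType) (e A : {set T}) : e \subset A -> (#|A| <= #|e|)%N -> e = A.
Proof. by move=> s c; apply/eqP; rewrite eqEcard s c. Qed.

Lemma sub2of3 (T : finType) (p q r : T) (e : {set T}) : p <> q -> p <> r -> q <> r ->
  e \subset [set p; q; r] -> #|e| = 2%N ->
  [\/ e = [set p; q], e = [set p; r] | e = [set q; r]].
Proof.
move=> pq pr qr /subsetP s c2.
case pe: (p \in e); case qe: (q \in e).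
- apply: Or31; apply/esym/sub_eq; last by rewrite c2 cards2; case: eqP.
  by apply/subsetP => y; rewrite !inE => /orP[]/eqP->.
- apply: Or32; apply: sub_eq; last by rewrite c2 cards2; case: eqP.
  apply/subsetP => y ye; have := s y ye; rewrite !inE => /orP[/orP[]|] /eqP yy; subst y.
  + by rewrite eqxx.
  + by rewrite ye in qe.
  + by rewrite eqxx orbT.
- apply: Or33; apply: sub_eq; last by rewrite c2 cards2; case: eqP.
  apply/subsetP => y ye; have := s y ye; rewrite !inE => /orP[/orP[]|] /eqP yy; subst y.
  + by rewrite ye in pe.
  + by rewrite eqxx.
  + by rewrite eqxx orbT.
- apply: Or33; apply: sub_eq; last by rewrite c2 cards2; case: eqP.
  apply/subsetP => y ye; have := s y ye; rewrite !inE => /orP[/orP[]|] /eqP yy; subst y.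
  + by rewrite ye in pe.
  + by rewrite ye in qe.
  + by rewrite eqxx orbT.
Qed.

Lemma in_ae_l y x z : (inl y \in ae x z) = (y == idx z).
Proof. by rewrite !inE !eqsE. Qed.
Lemma in_ae_r y x z : (inr y \in ae x z) = (y == x).
Proof. by rewrite !inE !eqsE orbF. Qed.
Lemma in_be_l y z : (inl y \in be z) = (y == idx z) || (y == idx (z + 1)).
Proof. by rewrite !inE !eqsE. Qed.
Lemma in_be_r y z : (inr y \in be z) = false.
Proof. by rewrite !inE !eqsE. Qed.

Lemma idx_shift a b d : idx a = idx b -> idx (a + d) = idx (b + d).
Proof.
move/idx_eqP => h; apply/idx_eqP.
have -> : a + d - (b + d) = a - b by ring.
done.
Qed.

Lemma ae_congr x z z' : idx z = idx z' -> ae x z = ae x z'.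
Proof. by rewrite /ae => ->. Qed.
Lemma be_congr z z' : idx z = idx z' -> be z = be z'.
Proof. by rewrite /be => e; rewrite e (idx_shift 1 e). Qed.
Lemma Fc_congr x z z' : idx z = idx z' -> Fc x z = Fc x z'.
Proof. by rewrite /Fc => e; rewrite e (idx_shift 1 e). Qed.

Lemma edge_cases e : is_edge (BP_faces n) e ->
  (exists x z, e = ae x z) \/ (exists z, e = be z).
Proof.
case=> c2 [F /faces_char [x [z ->]] sub].
have [] := sub2of3 _ _ _ sub c2.
- by [].
- by [].
- by move/eqP; rewrite eq_inl => /eqP; apply: idx_z1.
- by move=> ->; left; exists x, z.
- by move=> ->; left; exists x, (z + 1).
- by move=> ->; right; exists z.
Qed.

Lemma sub_ae x z y w : ae x z \subset Fc y w ->
  x = y /\ (idx z = idx w \/ idx z = idx (w + 1)).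
Proof.
move/subsetP => s.
have := s (inr x); rewrite in_ae_r eqxx in_Fc_r => /(_ isT) /eqP ->.
have := s (inl (idx z)); rewrite in_ae_l eqxx in_Fc_l => /(_ isT) /orP[] /eqP ->; by auto.
Qed.

Lemma sub_be z y w : be z \subset Fc y w -> idx z = idx w.
Proof.
move/subsetP => s.
have := s (inl (idx z)); rewrite in_be_l eqxx in_Fc_l => /(_ isT) /orP[] /eqP // e1.
have := s (inl (idx (z + 1))); rewrite in_be_l eqxx orbT in_Fc_l => /(_ isT) /orP[] /eqP e2.
- have e3 := idx_shift 1 e1; rewrite e2 in e3.
  exfalso; apply: (idx_ne _ e3); right; right; right; ring.
- by rewrite -e2 in e1; case: (idx_z1 e1).
Qed.

Lemma ae_sub_Fc x z w : idx z = idx w \/ idx z = idx (w + 1) -> ae x z \subset Fc x w.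
Proof.
move=> h; apply/subsetP => v /set2P[]->.
- by rewrite in_Fc_r.
- by rewrite in_Fc_l; case: h => ->; rewrite eqxx ?orbT.
Qed.

Lemma be_sub_Fc x z : be z \subset Fc x z.
Proof.
apply/subsetP => v /set2P[]->; by rewrite in_Fc_l eqxx ?orbT.
Qed.

Lemma ae_faces x z H : H \in BP_faces n -> ae x z \subset H ->
  H = Fc x z \/ H = Fc x (z - 1).
Proof.
case/faces_char => y [w ->] /sub_ae [<- [e|e]].
- by left; apply: Fc_congr.
- right; apply: Fc_congr; have := idx_shift (-1) e.
  have -> : w + 1 - 1 = w by ring.
  by move=> ->.
Qed.

Lemma be_faces z H : H \in BP_faces n -> be z \subset H ->
  H = Fc true z \/ H = Fc false z.
Proof.
case/faces_char => y [w ->] /sub_be e; rewrite -(Fc_congr y e).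
by case: y; auto.
Qed.

Lemma pigeon (T : Type) (A B F G G' : T) : (F = A \/ F = B) -> (G = A \/ G = B) ->
  (G' = A \/ G' = B) -> F <> G -> F <> G' -> G = G'.
Proof. by case=> ->; case=> ->; case=> ->. Qed.

Lemma two_faces (e F G G' : {set VT}) : #|e| = 2%N ->
  F \in BP_faces n -> G \in BP_faces n -> G' \in BP_faces n ->
  e \subset F -> e \subset G -> e \subset G' -> F <> G -> F <> G' -> G = G'.
Proof.
move=> c2 FF GF G'F sF sG sG'.
have : is_edge (BP_faces n) e by split => //; exists F.
case/edge_cases => [[x [z ee]]|[z ee]]; subst e.
- by apply: pigeon; [exact: ae_faces FF sF | exact: ae_faces GF sG | exact: ae_faces G'F sG'].
- by apply: pigeon; [exact: be_faces FF sF | exact: be_faces GF sG | exact: be_faces G'F sG'].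
Qed.


Definition ap (x : bool) (m : int) : bool := if (m %% 2)%Z == 0 then x else ~~ x.

Lemma ap_even x m : (m %% 2)%Z = 0 -> ap x m = x.
Proof. by rewrite /ap => ->. Qed.
Lemma ap_odd x m : (m %% 2)%Z = 1 -> ap x m = ~~ x.
Proof. by rewrite /ap => ->. Qed.
Lemma ap_neg x m : ap (~~ x) m = ~~ ap x m.
Proof. by rewrite /ap; case: ifP. Qed.
Lemma ap_add x m t : ap x (m + t) = ap (ap x t) m.
Proof.
have [h|h] : ((t %% 2)%Z = 0 \/ (t %% 2)%Z = 1) by lia.
all: have [h'|h'] : ((m %% 2)%Z = 0 \/ (m %% 2)%Z = 1) by lia.
- by rewrite !ap_even //; lia.
- by rewrite (ap_even x h) !ap_odd //; lia.
- by rewrite (ap_odd x h) (ap_even _ h') ap_odd //; lia.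
- by rewrite (ap_odd x h) (ap_odd _ h') negbK ap_even //; lia.
Qed.
Lemma ap_succ x m : ap x (m + 1) = ~~ ap x m.
Proof. by rewrite ap_add (ap_odd x (_ : (1 %% 2)%Z = 1)) // ap_neg. Qed.

Definition Fz (c : int) (x : bool) (i : int) : {set VT} :=
  if (i %% 3)%Z == 0 then ae (ap x (i %/ 3)%Z) (c + 2 * (i %/ 3)%Z)
  else if (i %% 3)%Z == 1 then be (c + 2 * (i %/ 3)%Z)
  else ae (~~ ap x (i %/ 3)%Z) (c + 2 * (i %/ 3)%Z + 1).

Lemma Fz0 c x m : Fz c x (3 * m) = ae (ap x m) (c + 2 * m).
Proof.
rewrite /Fz; have -> : ((3 * m) %% 3)%Z = 0 by lia.
by have -> : ((3 * m) %/ 3)%Z = m by lia.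
Qed.
Lemma Fz1 c x m : Fz c x (3 * m + 1) = be (c + 2 * m).
Proof.
rewrite /Fz; have -> : ((3 * m + 1) %% 3)%Z = 1 by lia.
by have -> : ((3 * m + 1) %/ 3)%Z = m by lia.
Qed.
Lemma Fz2 c x m : Fz c x (3 * m + 2) = ae (~~ ap x m) (c + 2 * m + 1).
Proof.
rewrite /Fz; have -> : ((3 * m + 2) %% 3)%Z = 2 by lia.
by have -> : ((3 * m + 2) %/ 3)%Z = m by lia.
Qed.
Lemma Fz3 c x m : Fz c x (3 * m + 3) = ae (~~ ap x m) (c + 2 * m + 2).
Proof.
have -> : 3 * m + 3 = 3 * (m + 1) by ring.
rewrite Fz0 ap_succ; congr ae; ring.
Qed.
Lemma Fz4 c x m : Fz c x (3 * m + 4) = be (c + 2 * m + 2).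
Proof.
have -> : 3 * m + 4 = 3 * (m + 1) + 1 by ring.
rewrite Fz1; congr be; ring.
Qed.

Lemma split3 (i : int) : exists m, [\/ i = 3 * m, i = 3 * m + 1 | i = 3 * m + 2].
Proof.
exists (i %/ 3)%Z.
have [h|[h|h]] : ((i %% 3)%Z = 0 \/ (i %% 3)%Z = 1 \/ (i %% 3)%Z = 2) by lia.
- by apply: Or31; lia.
- by apply: Or32; lia.
- by apply: Or33; lia.
Qed.

Lemma disj2 (T : finType) (p q r s : T) : p != r -> p != s -> q != r -> q != s ->
  [disjoint [set p; q] & [set r; s]].
Proof.
move=> h1 h2 h3 h4.
rewrite disjoint_subset; apply/subsetP => y; rewrite !inE => /orP[]/eqP->;
  by rewrite negb_or ?h1 ?h2 ?h3 ?h4.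
Qed.

Lemma ninl a b : a - b = 1 \/ a - b = 2 \/ b - a = 1 \/ b - a = 2 ->
  (inl (idx a) : VT) != inl (idx b).
Proof. by move=> h; rewrite eq_inl; apply/eqP; apply: idx_ne. Qed.

Lemma ninrl (a : bool) z : (inr a : VT) != inl (idx z).
Proof. by rewrite eqsE. Qed.
Lemma ninlr (a : bool) z : (inl (idx z) : VT) != inr a.
Proof. by rewrite eqsE. Qed.
Lemma ninr (a : bool) : (inr a : VT) != inr (~~ a).
Proof. by rewrite eq_inr; case: a. Qed.

Lemma card_ae x z : #|ae x z| = 2%N.
Proof. by apply: card2. Qed.
Lemma card_be z : #|be z| = 2%N.
Proof. by apply: card2; apply/eqP; apply: ninl; right; right; left; ring. Qed.

Lemma ae_ne_be x z w : ae x z <> be w.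
Proof. by move=> h; have := in_ae_r x x z; rewrite h in_be_r eqxx. Qed.

Lemma Fc_in x z : Fc x z \in BP_faces n.
Proof. by apply/faces_char; exists x, z. Qed.

Lemma Fz_zz c x : is_zigzag (BP_faces n) (Fz c x).
Proof.
apply: (zz_local face3) => i.
have [m [] ->] := split3 i.
- rewrite Fz0 Fz1 Fz2.
  split; first exact: card_ae.
  + exact: ae_ne_be.
  + exists (Fc (ap x m) (c + 2 * m)); first exact: Fc_in.
    by rewrite ae_sub_Fc ?be_sub_Fc //; left.
  + apply: disj2; rewrite ?ninrl ?ninlr ?ninr //.
    by apply: ninl; right; right; left; ring.
- have -> : 3 * m + 1 + 1 = 3 * m + 2 by ring.
  have -> : 3 * m + 1 + 2 = 3 * m + 3 by ring.
  rewrite Fz1 Fz2 Fz3.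
  split; first exact: card_be.
  + by move=> h; apply: (@ae_ne_be (~~ ap x m) (c + 2 * m + 1) (c + 2 * m)).
  + exists (Fc (~~ ap x m) (c + 2 * m)); first exact: Fc_in.
    by rewrite ae_sub_Fc ?be_sub_Fc //; right.
  + by apply: disj2; rewrite ?ninrl ?ninlr //; apply: ninl; lia.
- have -> : 3 * m + 2 + 1 = 3 * m + 3 by ring.
  have -> : 3 * m + 2 + 2 = 3 * m + 4 by ring.
  rewrite Fz2 Fz3 Fz4.
  split; first exact: card_ae.
  + move=> h; have := in_ae_l (idx (c + 2 * m + 1)) (~~ ap x m) (c + 2 * m + 1).
    rewrite h in_ae_l eqxx => /eqP; apply: idx_ne; lia.
  + exists (Fc (~~ ap x m) (c + 2 * m + 1)); first exact: Fc_in.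
    rewrite !ae_sub_Fc //; [right | left] => //.
    by congr idx; ring.
  + by apply: disj2; rewrite ?ninrl ?ninlr //; apply: ninl; lia.
Qed.


Lemma Fz_at0 c x : Fz c x 0 = ae x c.
Proof.
have := Fz0 c x 0; rewrite mulr0 addr0 (ap_even x (_ : (0 %% 2)%Z = 0)) //.
Qed.
Lemma Fz_at1 c x : Fz c x 1 = be c.
Proof.
have := Fz1 c x 0; rewrite !mulr0 addr0 add0r. done.
Qed.
Lemma Fz_m1 c x : Fz c x (-1) = ae x (c - 1).
Proof.
have := Fz2 c x (-1); have -> : 3 * -1 + 2 = -1 :> int by ring.
move=> ->; rewrite (ap_odd x (_ : ((-1) %% 2)%Z = 1)); last by lia.
rewrite negbK; congr ae; ring.
Qed.
Lemma Fz_m2 c x : Fz c x (-2) = be (c - 2).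
Proof.
have := Fz1 c x (-1); have -> : 3 * -1 + 1 = -2 :> int by ring.
move=> ->; congr be; ring.
Qed.

Lemma zz_class Z : is_zigzag (BP_faces n) Z ->
  exists c x, zeq Z (Fz c x) \/ zeq Z (zrev (Fz c x)).
Proof.
move=> HZ.
have edgeZ i : is_edge (BP_faces n) (Z i) by case: (HZ i) => [].
have [j [w ej]] : exists j w, Z j = be w.
  case: (edge_cases (edgeZ 0)) => [[x0 [z0 e0]] | [w e0]]; last by exists 0, w.
  case: (edge_cases (edgeZ 1)) => [[x1 [z1 e1]] | [w e1]]; last by exists 1, w.
  case: (edge_cases (edgeZ 2)) => [[x2 [z2 e2]] | [w e2]]; last by exists 2, w.
  exfalso.
  have [_ [_ [F /faces_char [y [u ->]] /andP[s0 s1]]] _ dj] := HZ 0.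
  have [_ [_ [G /faces_char [y' [u' ->]] /andP[t1 t2]]] _ _] := HZ 1.
  rewrite add0r in s1 dj; have E : 1 + 1 = 2 :> int by []. rewrite E in t2.
  rewrite e0 in s0; rewrite e1 in s1 t1; rewrite e2 in t2.
  have [hx0 _] := sub_ae s0; have [hx1 _] := sub_ae s1.
  have [hx1' _] := sub_ae t1; have [hx2 _] := sub_ae t2.
  have : inr x0 \in Z 0 by rewrite e0 in_ae_r.
  move/(disjointFr dj); rewrite e2 in_ae_r.
  by rewrite hx0 -hx1 hx1' -hx2 eqxx.
have Ej : j - 1 + 1 = j by ring.
have [_ [ne [F /faces_char [y [u eF]] /andP[s0 s1]]] _ _] := HZ (j - 1).
rewrite Ej ej eF in s1; rewrite eF in s0; rewrite Ej ej in ne.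
have hw := sub_be s1.
case: (edge_cases (edgeZ (j - 1))) => [[x [v ev]] | [w' ev]]; last first.
  by exfalso; rewrite ev in s0 ne; apply: ne; apply: be_congr; rewrite (sub_be s0) hw.
rewrite ev in s0 ne; have [hxy hv] := sub_ae s0.
have HW := zz_shift (j - 1) HZ.
case: hv => hv.
- have h0 : Z (0 + (j - 1)) = Fz w x 0.
    by rewrite add0r ev Fz_at0; apply: ae_congr; rewrite hv hw.
  have h1 : Z (1 + (j - 1)) = Fz w x 1.
    by rewrite addrC Ej ej Fz_at1.
  have := zz_det face3 two_faces HW (Fz_zz w x) h0 h1 => eqW.
  exists w, x; left; exists (- (j - 1)) => i.
  have := eqW (i - (j - 1)); have -> : i - (j - 1) + (j - 1) = i by ring.
  done.
- have HR := zz_shift 1 (zz_rev face3 (Fz_zz (w + 2) x)).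
  have h0 : Z (0 + (j - 1)) = zrev (Fz (w + 2) x) (0 + 1).
    rewrite add0r ev /zrev Fz_m1; apply: ae_congr; rewrite hv.
    have := idx_shift 1 hw => <-; congr idx; ring.
  have h1 : Z (1 + (j - 1)) = zrev (Fz (w + 2) x) (1 + 1).
    rewrite addrC Ej ej /zrev.
    have -> : - (1 + 1) = -2 :> int by [].
    rewrite Fz_m2; congr be; ring.
  have := zz_det face3 two_faces HW HR h0 h1 => eqW.
  exists (w + 2), x; right; exists (- (j - 1) + 1) => i.
  have := eqW (i - (j - 1)); have -> : i - (j - 1) + (j - 1) = i by ring.
  by move=> ->; congr zrev; ring.
Qed.


Lemma Fz_congr c c' x i : idx c = idx c' -> Fz c x i = Fz c' x i.
Proof.
move=> h; rewrite /Fz.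
have h2 := idx_shift (2 * (i %/ 3)%Z) h.
case: ifP => _; first by apply: ae_congr.
case: ifP => _; first by apply: be_congr.
by apply: ae_congr; apply: idx_shift.
Qed.

Lemma Fz_shift c x t i : Fz c x (i + 3 * t) = Fz (c + 2 * t) (ap x t) i.
Proof.
have [m [] ->] := split3 i.
- have -> : 3 * m + 3 * t = 3 * (m + t) by ring.
  rewrite !Fz0 ap_add; congr ae; ring.
- have -> : 3 * m + 1 + 3 * t = 3 * (m + t) + 1 by ring.
  rewrite !Fz1; congr be; ring.
- have -> : 3 * m + 2 + 3 * t = 3 * (m + t) + 2 by ring.
  rewrite !Fz2 ap_add; congr ae; ring.
Qed.

Lemma Fz_rep c x t r y : idx (c + 2 * t) = idx r -> ap x t = y ->
  zeq (Fz c x) (Fz r y).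
Proof.
move=> h1 h2; exists (- (3 * t)) => i.
have := Fz_shift c x t (i - 3 * t); have -> : i - 3 * t + 3 * t = i by ring.
by move=> ->; rewrite h2; apply: Fz_congr.
Qed.

Lemma ae_inj x z x' z' : ae x z = ae x' z' -> x = x' /\ idx z = idx z'.
Proof.
move=> h; split.
- by have := in_ae_r x x z; rewrite h in_ae_r eqxx => /eqP.
- by have := in_ae_l (idx z) x z; rewrite h in_ae_l eqxx => /eqP.
Qed.

Lemma be_inj z w : be z = be w -> idx z = idx w.
Proof.
move=> h; apply: (@sub_be z true w); rewrite h; exact: be_sub_Fc.
Qed.

Lemma Fz_inv c x c' x' : zeq (Fz c x) (Fz c' x') ->
  exists t, idx c = idx (c' + 2 * t) /\ x = ap x' t.
Proof.
case=> s H.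
have := H 1; rewrite Fz_at1.
have [m [] e] := split3 (1 + s); rewrite e ?Fz0 ?Fz1 ?Fz2.
- by move=> h; case: (ae_ne_be (esym h)).
- move=> _; exists m; have := H 0; rewrite Fz_at0.
  have -> : 0 + s = 3 * m by lia.
  by rewrite Fz0 => /ae_inj [-> ->].
- by move=> h; case: (ae_ne_be (esym h)).
Qed.

Lemma Fz_rev_neq c x c' x' : ~ zeq (Fz c x) (zrev (Fz c' x')).
Proof.
case=> s H.
have := H 1; rewrite Fz_at1 /zrev.
have [m [] e] := split3 (- (1 + s)); rewrite e ?Fz0 ?Fz1 ?Fz2.
- by move=> h; case: (ae_ne_be (esym h)).
- move=> /be_inj h1; have := H 0; rewrite Fz_at0 /zrev.
  have -> : - (0 + s) = 3 * m + 2 by lia.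
  rewrite Fz2 => /ae_inj [_ h2].
  rewrite h1 in h2; apply: (idx_ne _ h2); lia.
- by move=> h; case: (ae_ne_be (esym h)).
Qed.

Lemma cover Z c x Z0 : zeq (Fz c x) Z0 ->
  zeq Z (Fz c x) \/ zeq Z (zrev (Fz c x)) -> zeq Z Z0 \/ zeq Z (zrev Z0).
Proof.
move=> h [h'|h'].
- by left; apply: zeq_trans h' h.
- by right; apply: zeq_trans h' (zeq_rev h).
Qed.

Lemma idx_dvd a b : idx a = idx b -> exists q, a - b = q * n%:Z.
Proof. by move/idx_eqP/dvdzP. Qed.

Lemma idx_mul a b q : a - b = q * n%:Z -> idx a = idx b.
Proof. by move=> h; apply/idx_eqP/dvdzP; exists q. Qed.

Lemma neq_par k c c' y y' : n = k.*2 -> ((c - c') %% 2)%Z = 1 ->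
  ~ zeq (Fz c y) (Fz c' y').
Proof.
move=> hk hp /Fz_inv [t [/idx_dvd [q e] _]].
have hn2 : n%:Z = 2 * k%:Z by rewrite hk; lia.
rewrite hn2 in e.
have e' : c - c' = 2 * (t + q * k%:Z) by rewrite -(subrK (c' + 2 * t) c) e; ring.
lia.
Qed.

Lemma neq_ap k c y y' : n = k.*2 -> ~~ odd k -> y != y' ->
  ~ zeq (Fz c y) (Fz c y').
Proof.
move=> hk hke hy /Fz_inv [t [/idx_dvd [q e] ey]].
have hk2 : k%:Z = 2 * (k./2)%:Z.
  have := odd_double_half k; rewrite (negbTE hke) add0n => hh. lia.
have hn2 : n%:Z = 2 * k%:Z by rewrite hk; lia.
rewrite hn2 hk2 in e.
have et : t = 2 * (- (q * (k./2)%:Z)).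
  have e' : - (2 * t) = c - (c + 2 * t) by ring.
  rewrite e in e'.
  have e'' : - (2 * t) = 2 * (2 * (q * (k./2)%:Z)) by rewrite e'; ring.
  lia.
move: ey; rewrite ap_even; last by rewrite et; lia.
by move=> eyy; rewrite eyy eqxx in hy.
Qed.


Lemma rep_odd : odd n -> forall c x, zeq (Fz c x) (Fz 0 false).
Proof.
move=> ho c x.
have hn2 : n%:Z = 2 * (n./2)%:Z + 1 by have := odd_double_half n; rewrite ho; lia.
have hno : (n%:Z %% 2)%Z = 1 by lia.
pose t0 := - (c * ((n./2)%:Z + 1)).
case hx: (ap x t0).
- apply: (@Fz_rep c x (t0 + n%:Z)).
  + apply: (@idx_mul _ _ (2 - c)); rewrite hn2 /t0; ring.
  + by rewrite ap_add (ap_odd x hno) ap_neg hx.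
- apply: (@Fz_rep c x t0) => //.
  apply: (@idx_mul _ _ (- c)); rewrite hn2 /t0; ring.
Qed.

Lemma rep_kodd k : n = k.*2 -> odd k -> forall c x,
  exists2 r, (r = 0 \/ r = 1) & zeq (Fz c x) (Fz r false).
Proof.
move=> hk ho c x.
have hn2 : n%:Z = 2 * k%:Z by rewrite hk; lia.
have hko : (k%:Z %% 2)%Z = 1 by have := odd_double_half k; rewrite ho; lia.
exists (c %% 2)%Z; first lia.
pose t0 := - (c %/ 2)%Z.
case hx: (ap x t0).
- apply: (@Fz_rep c x (t0 + k%:Z)).
  + apply: (@idx_mul _ _ 1); rewrite hn2 /t0; lia.
  + by rewrite ap_add (ap_odd x hko) ap_neg hx.
- apply: (@Fz_rep c x t0) => //.
  apply: (@idx_mul _ _ 0); rewrite /t0; lia.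
Qed.

Lemma rep_keven k : n = k.*2 -> forall c x,
  exists r y, (r = 0 \/ r = 1) /\ zeq (Fz c x) (Fz r y).
Proof.
move=> hk c x.
exists (c %% 2)%Z, (ap x (- (c %/ 2)%Z)); split; first lia.
apply: (@Fz_rep c x (- (c %/ 2)%Z)) => //.
apply: (@idx_mul _ _ 0); lia.
Qed.

Lemma part1 : odd n -> z_knotted (BP_faces n).
Proof.
move=> ho; exists (Fz 0 false); split.
- exact: Fz_zz.
- exact: Fz_rev_neq.
- move=> Z hZ; have [c [x h]] := zz_class hZ.
  exact: cover (rep_odd ho c x) h.
Qed.

Lemma part2 k : n = k.*2 -> odd k -> num_zigzags_up_to_rev (BP_faces n) 2%N.
Proof.
move=> hk ho.
exists (fun j : 'I_2 => Fz (Posz j) false); split.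
- move=> j; exact: Fz_zz.
- move=> j1 j2 ne; split; last exact: Fz_rev_neq.
  case: j1 j2 ne => [[|[|a]] p1] [[|[|b]] p2] ne //=.
  + by exfalso; apply: ne; apply: val_inj.
  + by apply: (neq_par hk); lia.
  + by apply: (neq_par hk); lia.
  + by exfalso; apply: ne; apply: val_inj.
- move=> Z hZ; have [c [x h]] := zz_class hZ.
  have [r [] -> hr] := rep_kodd hk ho c x.
  + by exists (Ordinal (isT : (0 < 2)%N)); exact: cover hr h.
  + by exists (Ordinal (isT : (1 < 2)%N)); exact: cover hr h.
Qed.

Lemma part3 k : n = k.*2 -> ~~ odd k -> num_zigzags_up_to_rev (BP_faces n) 4%N.
Proof.
move=> hk he.
exists (fun j : 'I_4 => Fz (Posz (odd j)) (1 < j)%N); split.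
- move=> j; exact: Fz_zz.
- move=> j1 j2 ne; split; last exact: Fz_rev_neq.
  case: j1 j2 ne => [[|[|[|[|a]]]] p1] [[|[|[|[|b]]]] p2] ne //=;
  try first [ by exfalso; apply: ne; apply: val_inj
        | by apply: (neq_par hk); lia
        | by apply: (neq_ap hk he) ].
- move=> Z hZ; have [c [x h]] := zz_class hZ.
  have [r [y [[] -> hr]]] := rep_keven hk c x; case: y hr => hr.
  + by exists (Ordinal (isT : (2 < 4)%N)); exact: cover hr h.
  + by exists (Ordinal (isT : (0 < 4)%N)); exact: cover hr h.
  + by exists (Ordinal (isT : (3 < 4)%N)); exact: cover hr h.
  + by exists (Ordinal (isT : (1 < 4)%N)); exact: cover hr h.
Qed.

End BP.

Theorem mainTheorem9 (n : nat) (hn : 3 <= n) :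
  [/\ odd n -> z_knotted (BP_faces n),
      (forall k, n = k.*2 -> odd k -> num_zigzags_up_to_rev (BP_faces n) 2)
    & (forall k, n = k.*2 -> ~~ odd k -> num_zigzags_up_to_rev (BP_faces n) 4)].
Proof.
split.
- exact: part1 hn.
- exact: (@part2 n hn).
- exact: (@part3 n hn).
Qed.
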